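(* Let $N\ge1$, $\Omega=[1,N+1]$, and for $j=1,\ldots,N$ let $B_{1,j}(x)=1$ if $j\le x<j+1$ and $B_{1,j}(x)=0$ otherwise. Let $s=1$. If the distinct points $\{x_1,\ldots,x_m\}\subset\Omega$ are unisolvent for the $s$-sparse interpolation with the basis $\{B_{1,1},\ldots,B_{1,N}\}$ and the domain $\Omega$, then $m\ge N$.
   Context: Let $\mathbf U^s:=\{\sum_{j\in T}c_jB_{1,j}: T\subset\{1,\ldots,N\},\ \#T\le s,\ c_j\in\mathbb{C}\}$. A set of $m$ distinct points $\{x_1,\ldots,x_m\}\subset\Omega$ is unisolvent if whenever $f,g\in\mathbf U^s$ satisfy $f(x_j)=g(x_j)$ for $j=1,\ldots,m$, then $f\equiv g$. *)

(* Defs.v *)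
From HB Require Import structures.
From mathcomp Require Import all_boot all_order all_algebra.
From mathcomp Require Import reals complex.
Set Implicit Arguments. Unset Strict Implicit. Unset Printing Implicit Defensive.
Import Order.TTheory GRing.Theory Num.Theory.
Local Open Scope ring_scope.

Definition B1 (R : realType) (j : nat) (x : R) : complex R :=
  if (j%:R <= x) && (x < j%:R + 1) then 1 else 0.

Definition Omega (R : realType) (N : nat) (x : R) : Prop :=
  1 <= x /\ x <= N%:R + 1.

(* The s-sparse set U^s spanned by B_{1,1},...,B_{1,N}; the index j : 'I_N
   stands for B_{1, j+1}. *)
Definition Us (R : realType) (N s : nat) (f : R -> complex R) : Prop :=
  exists (T : {set 'I_N}) (c : 'I_N -> complex R),
    (#|T| <= s)%N /\ forall x, f x = \sum_(j in T) c j * B1 j.+1 x.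

Definition unisolvent (R : realType) (N s m : nat) (pts : 'I_m -> R) : Prop :=
  forall f g : R -> complex R, Us N s f -> Us N s g ->
    (forall i, f (pts i) = g (pts i)) -> forall x, Omega N x -> f x = g x.

(* Main.v *)
Require Import Defs.
From HB Require Import structures.
From mathcomp Require Import all_boot all_order all_algebra.
From mathcomp Require Import reals complex.
Import Order.TTheory GRing.Theory Num.Theory.
Local Open Scope ring_scope.

Lemma disj_int (R : realType) (a b : nat) (x : R) :
  (a%:R <= x) && (x < a%:R + 1) -> (b%:R <= x) && (x < b%:R + 1) -> a = b.
Proof.
move=> /andP[ha ha'] /andP[hb hb'].
apply/eqP; rewrite eqn_leq; apply/andP; split; rewrite leqNgt; apply/negP => h.
- have : (b.+1)%:R <= (a%:R : R) by rewrite ler_nat.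
  rewrite -addn1 natrD => h2.
  have := lt_le_trans hb' h2; rewrite ltNge ha //.
- have : (a.+1)%:R <= (b%:R : R) by rewrite ler_nat.
  rewrite -addn1 natrD => h2.
  have := lt_le_trans ha' h2; rewrite ltNge hb //.
Qed.

Theorem proposition1 (R : realType) (N m : nat) (pts : 'I_m -> R) :
  (1 <= N)%N ->
  injective pts ->
  (forall i, Omega N (pts i)) ->
  unisolvent N 1 pts ->
  (N <= m)%N.
Proof.
move=> hN _ _ hU.
case: (boolP [forall j : 'I_N, [exists i : 'I_m,
   ((j.+1)%:R <= pts i) && (pts i < (j.+1)%:R + 1)]]) => H.
- have : forall j : 'I_N, exists i : 'I_m,
     ((j.+1)%:R <= pts i) && (pts i < (j.+1)%:R + 1).
    by move=> j; move/forallP: H => /(_ j) /existsP.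
  move=> /fin_all_exists [g Hg].
  have ginj : injective g.
    move=> j1 j2 e; apply/val_inj.
    have h1 := Hg j1; have h2 := Hg j2; rewrite e in h1.
    by have := @disj_int R _ _ _ h1 h2 => -[].
  by have := leq_card g ginj; rewrite !card_ord.
- exfalso; move: H; rewrite negb_forall => /existsP[j]; rewrite negb_exists => /forallP Hj.
  have := hU (fun x : R => B1 j.+1 x) (fun _ => 0).
  have Uf : Us N 1 (fun x : R => B1 j.+1 x).
    exists [set j], (fun _ => 1); split; first by rewrite cards1.
    by move=> x; rewrite big_set1 mul1r.
  have Ug : Us N 1 (fun _ : R => (0 : complex R)).
    exists set0, (fun _ => 1); split; first by rewrite cards0.
    by move=> x; rewrite big_set0.
  move=> /(_ Uf Ug) H.
  have : B1 j.+1 ((j.+1)%:R : R) = 0.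
    apply: H.
    + by move=> i; rewrite /B1 (negbTE (Hj i)).
    + split; first by rewrite ler1n.
      rewrite -natr1 lerD2r ler_nat; exact: ltnW (ltn_ord j).
  rewrite /B1 lexx ltrDl ltr01 /= => /eqP; by rewrite oner_eq0.
Qed.
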